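(* Let $\Gamma$ be a MaxSAT instance encoded with blocking variables $b_1,\dots,b_m$, with $\mathrm{cost}(\Gamma)=k$, and suppose $\Gamma$ contains the unit clauses $b_{i_1},\dots,b_{i_k}$. Then there is a cost-PR calculus derivation from $\Gamma$ of the unit clause $\lnot b_j$ for each $j\notin\{i_1,\dots,i_k\}$, using $O(km)$ steps.
   Context: Substitutions map variables to $0$, $1$ or literals; a partial assignment has $\sigma(x)\in\{0,1,x\}$; $(\sigma\circ\tau)(x)=\sigma(\tau(x))$; total means all variables assigned. $C{\upharpoonright}_\sigma$: apply $\sigma$ to the literals and simplify; $\Gamma{\upharpoonright}_\sigma$ is the multiset of $C{\upharpoonright}_\sigma\ne1$, $C\in\Gamma$. $\lnot C$ is the partial assignment falsifying all literals of $C$. $\Gamma\vdash_1 C$ means unit propagation on $\Gamma{\upharpoonright}_{\lnot C}$ derives the empty clause; $\Gamma\vdash_1\Delta$ means this for all $D\in\Delta$. $\mathrm{cost}(\alpha)=\sum_i\alpha(b_i)$ for total $\alpha$; $\mathrm{cost}(\Gamma)=\min\{\mathrm{cost}(\alpha):\alpha\models\Gamma\}$. $C$ is cost-PR w.r.t. $\Gamma$ if there is a partial assignment $\sigma$ with (1) $\Gamma{\upharpoonright}_{\lnot C}\vdash_1(\Gamma\cup\{C\}){\upharpoonright}_\sigma$ and (2) $\mathrm{cost}(\tau\circ\sigma)\le\mathrm{cost}(\tau)$ for all total $\tau\supseteq\lnot C$. A cost-PR calculus derivation from $\Gamma$: sequence $D_1,\dots,D_t$, each in $\Gamma$, or by weakening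 or resolution from earlier clauses, or cost-PR w.r.t. $\Gamma\cup\{D_1,\dots,D_{i-1}\}$ with $\mathrm{Var}(D_i)\subseteq\mathrm{Var}(\Gamma)$. *)

(* Defs.v *)
From mathcomp Require Import all_boot.
Set Implicit Arguments. Unset Strict Implicit. Unset Printing Implicit Defensive.

(* Variables are natural numbers; a literal (x, p) is x if p = true, ~x if p = false. *)
Definition var := nat.
Definition lit := (var * bool)%type.
Definition clause := seq lit.
(* A formula is a multiset of clauses, represented as a list. *)
Definition cnf := seq clause.

(* Partial assignment: sigma x = Some b  (x |-> b), None  (x |-> x). *)
Definition passign := var -> option bool.
Definition tassign := var -> bool.

Definition lit_val (s : passign) (l : lit) : option bool :=
  if s l.1 is Some v then Some (v == l.2) else None.

Definition clause_sat (s : passign) (C : clause) : bool :=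
  has (fun l => lit_val s l == Some true) C.

(* C|_sigma when C is not satisfied: remove the falsified literals *)
Definition clause_restr (s : passign) (C : clause) : clause :=
  [seq l <- C | lit_val s l != Some false].

Definition restr (s : passign) (F : cnf) : cnf :=
  [seq clause_restr s C | C <- F & ~~ clause_sat s C].

Definition negcl (C : clause) : passign := fun x =>
  if (x, true) \in C then Some false
  else if (x, false) \in C then Some true else None.

Definition lit_asg (l : lit) : passign := fun y =>
  if y == l.1 then Some l.2 else None.

Inductive up_ref : cnf -> Prop :=
  | up_empty F : [::] \in F -> up_ref F
  | up_unit F l : [:: l] \in F -> up_ref (restr (lit_asg l) F) -> up_ref F.

Definition derives1 (F : cnf) (C : clause) : Prop := up_ref (restr (negcl C) F).
Definition derives1_all (F D : cnf) : Prop := forall C, C \in D -> derives1 F C.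

Definition extends (t : tassign) (s : passign) : Prop :=
  forall x v, s x = Some v -> t x = v.

Definition comp (t : tassign) (s : passign) : tassign := fun x =>
  if s x is Some v then v else t x.

Definition cost (m : nat) (b : 'I_m -> var) (t : tassign) : nat :=
  \sum_(i < m) t (b i).

Definition models (t : tassign) (F : cnf) : Prop :=
  forall C, C \in F -> has (fun l => t l.1 == l.2) C.

Definition cost_is (m : nat) (b : 'I_m -> var) (F : cnf) (k : nat) : Prop :=
  (exists a, models a F /\ cost b a = k) /\
  (forall a, models a F -> k <= cost b a).

Definition cost_PR (m : nat) (b : 'I_m -> var) (F : cnf) (C : clause) : Prop :=
  exists s : passign,
    derives1_all (restr (negcl C) F) (restr s (C :: F)) /\
    (forall t, extends t (negcl C) -> cost b (comp t s) <= cost b t).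

Definition in_vars (F : cnf) (x : var) : Prop :=
  exists C p, C \in F /\ (x, p) \in C.

(* one derivation step: D may be added given the original formula G and the
   previously derived clauses prev *)
Definition step (m : nat) (b : 'I_m -> var) (G prev : cnf) (D : clause) : Prop :=
  D \in G
  \/ (exists C, C \in prev /\ {subset C <= D})
  \/ (exists C1 C2 x, C1 \in prev /\ C2 \in prev /\
        (x, true) \in C1 /\ (x, false) \in C2 /\
        D =i [seq l <- C1 | l != (x, true)] ++ [seq l <- C2 | l != (x, false)])
  \/ (cost_PR b (G ++ prev) D /\ forall x p, (x, p) \in D -> in_vars G x).

Definition derivation (m : nat) (b : 'I_m -> var) (G : cnf) (ds : seq clause) : Prop :=
  forall i, i < size ds -> step b G (take i ds) (nth [::] ds i).

Definition blocking_encoded (m : nat) (b : 'I_m -> var) (G : cnf) : Prop :=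
  injective b /\ forall i, in_vars G (b i).

(* Main.v *)
Require Import Defs.
From mathcomp Require Import all_boot.
From mathcomp Require Import zify.
Set Implicit Arguments. Unset Strict Implicit. Unset Printing Implicit Defensive.

Definition satc (a : tassign) (C : clause) := has (fun l => a l.1 == l.2) C.
Definition Cneg m (b : 'I_m -> var) (l : seq 'I_m) : clause := [seq (b i, false) | i <- l].

Definition Q m (b : 'I_m -> var) G (a : tassign) (I : {set 'I_m}) ds :=
  derivation b G ds /\ (forall C, C \in ds -> satc a C) /\
  (forall i, i \in I -> [:: (b i, true)] \in ds).

Lemma derivation_rcons m (b : 'I_m -> var) G ds D :
  derivation b G ds -> step b G ds D -> derivation b G (rcons ds D).
Proof.
move=> Hd Hs i; rewrite size_rcons ltnS leq_eqVlt => /orP [/eqP ->|lt].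
- by rewrite -cats1 take_size_cat // nth_cat ltnn subnn.
- rewrite -cats1 takel_cat ?(ltnW lt) // nth_cat lt; exact: Hd.
Qed.

Lemma derivation_inG m (b : 'I_m -> var) G ds :
  all (fun C => C \in G) ds -> derivation b G ds.
Proof. by move=> H i lt; left; exact: (allP H) _ (mem_nth _ lt). Qed.

Lemma cost_ge m (b : 'I_m -> var) (t : tassign) (A : {set 'I_m}) :
  (forall i, i \in A -> t (b i)) -> #|A| <= cost b t.
Proof.
move=> H; rewrite /cost -sum1_card [X in _ <= X](bigID (fun i => i \in A)) /=.
apply: leq_trans (leq_addr _ _); apply: leq_sum => i /H ->; done.
Qed.

Lemma negcl_Cneg m (b : 'I_m -> var) l i : i \in l -> negcl (Cneg b l) (b i) = Some true.
Proof.
move=> il; rewrite /negcl.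
have -> : ((b i, true) \in Cneg b l) = false by apply/mapP => -[x _ []].
by rewrite (map_f (fun i => (b i, false)) il).
Qed.

Lemma cpr_step m (b : 'I_m -> var) G a (I : {set 'I_m}) prev j :
  blocking_encoded b G -> models a G -> cost b a = #|I| ->
  (forall C, C \in prev -> satc a C) -> a (b j) = false ->
  step b G prev (Cneg b (j :: enum I)).
Proof.
move=> [inj Hv] Hm Hc Hp aj; right; right; right; split.
- exists (fun x => Some (a x)); split.
  + move=> D /mapP [D']; rewrite mem_filter => /andP [nsat inD] _.
    exfalso; move/negP: nsat; apply.
    have : satc a D'.
      move: inD; rewrite in_cons mem_cat => /orP [/eqP ->|/orP [inG|inP]].
      * by rewrite /satc /Cneg /= aj.
      * exact: Hm.
      * exact: Hp.
    rewrite /satc /clause_sat; apply: sub_has => l /= H.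
    by rewrite /lit_val H.
  + move=> t Ht.
    change (cost b a <= cost b t).
    rewrite Hc; apply: cost_ge => i iI; apply: Ht.
    by apply: negcl_Cneg; rewrite in_cons mem_enum iI orbT.
- by move=> x p /mapP [i _ [-> _]]; exact: Hv.
Qed.

Lemma res_step m (b : 'I_m -> var) G prev j i0 L :
  injective b -> [:: (b i0, true)] \in prev -> Cneg b (j :: i0 :: L) \in prev ->
  j != i0 -> i0 \notin L -> step b G prev (Cneg b (j :: L)).
Proof.
move=> inj H1 H2 ne nin; right; right; left.
exists [:: (b i0, true)], (Cneg b (j :: i0 :: L)), (b i0).
do 4 (split; first by rewrite /= ?in_cons ?eqxx ?orbT).
have E : [seq l <- Cneg b (j :: i0 :: L) | l != (b i0, false)] = Cneg b (j :: L).
  rewrite /Cneg filter_map /= /preim /= !xpair_eqE !andbT (inj_eq inj) ne eqxx /=.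
  congr (_ :: map _ _); apply/all_filterP/allP => x xL /=.
  rewrite xpair_eqE andbT (inj_eq inj); apply/eqP => exi; by rewrite -exi xL in nin.
by move=> x; rewrite E /= eqxx.
Qed.

Lemma chain m (b : 'I_m -> var) G a (I : {set 'I_m}) j :
  injective b -> j \notin I -> a (b j) = false ->
  forall L ds, uniq L -> {subset L <= I} -> Q b G a I ds -> Cneg b (j :: L) \in ds ->
  exists ds', Q b G a I ds' /\ [:: (b j, false)] \in ds' /\ {subset ds <= ds'} /\
    size ds' = size ds + size L.
Proof.
move=> inj jI aj; elim=> [|i0 L IH] ds uL sL [Hd [Hs Hu]] inC.
  by exists ds; rewrite addn0; do 3 split => //.
have i0I : i0 \in I by apply: sL; rewrite mem_head.
have ne : j != i0 by apply/eqP => e; rewrite e i0I in jI.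
move: uL => /= /andP [nin uL].
have Q1 : Q b G a I (rcons ds (Cneg b (j :: L))).
  split; [|split].
  - apply: derivation_rcons => //; exact: (res_step G inj (Hu _ i0I) inC ne nin).
  - by move=> C; rewrite mem_rcons in_cons => /orP [/eqP ->|/Hs]; rewrite /satc /Cneg /= ?aj.
  - by move=> i /Hu; rewrite mem_rcons in_cons => ->; rewrite orbT.
have inC1 : Cneg b (j :: L) \in rcons ds (Cneg b (j :: L)) by rewrite mem_rcons mem_head.
have [ds' [Q' [u' [s' z']]]] := IH _ uL (fun x xL => sL x (@mem_behead _ (i0 :: L) _ xL)) Q1 inC1.
exists ds'; split => //; split => //; split.
  by move=> x xd; apply: s'; rewrite mem_rcons in_cons xd orbT.
by rewrite z' size_rcons /= addnS addSn.
Qed.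

Lemma block m (b : 'I_m -> var) G a (I : {set 'I_m}) j ds :
  blocking_encoded b G -> models a G -> cost b a = #|I| ->
  j \notin I -> a (b j) = false -> Q b G a I ds ->
  exists ds', Q b G a I ds' /\ [:: (b j, false)] \in ds' /\ {subset ds <= ds'} /\
    size ds' = size ds + (#|I|).+1.
Proof.
move=> Hb Hm Hc jI aj [Hd [Hs Hu]].
have Q1 : Q b G a I (rcons ds (Cneg b (j :: enum I))).
  split; [|split].
  - apply: derivation_rcons => //; exact: (cpr_step Hb Hm Hc Hs aj).
  - by move=> C; rewrite mem_rcons in_cons => /orP [/eqP ->|/Hs]; rewrite /satc /Cneg /= ?aj.
  - by move=> i /Hu; rewrite mem_rcons in_cons => ->; rewrite orbT.
have inC1 : Cneg b (j :: enum I) \in rcons ds (Cneg b (j :: enum I)) by rewrite mem_rcons mem_head.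
have sub : {subset enum I <= I} by move=> x; rewrite mem_enum.
have [ds' [Q' [u' [s' z']]]] := chain Hb.1 jI aj (enum_uniq _) sub Q1 inC1.
exists ds'; split => //; split => //; split.
  by move=> x xd; apply: s'; rewrite mem_rcons in_cons xd orbT.
by rewrite z' size_rcons -cardE addSn addnS.
Qed.

Lemma blocks m (b : 'I_m -> var) G a (I : {set 'I_m}) :
  blocking_encoded b G -> models a G -> cost b a = #|I| ->
  (forall j, j \notin I -> a (b j) = false) ->
  forall s ds, all (fun j => j \notin I) s -> Q b G a I ds ->
  exists ds', Q b G a I ds' /\ (forall j, j \in s -> [:: (b j, false)] \in ds') /\
    {subset ds <= ds'} /\ size ds' = size ds + size s * (#|I|).+1.
Proof.
move=> Hb Hm Hc Ha; elim=> [|j s IH] ds.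
  by move=> _ Qd; exists ds; rewrite addn0; do 3 split => //.
move=> /= /andP [jI alls] Qd.
have [ds1 [Q1 [u1 [s1 z1]]]] := block Hb Hm Hc jI (Ha _ jI) Qd.
have [ds' [Q' [u' [s' z']]]] := IH ds1 alls Q1.
exists ds'; split => //; split; last split.
- by move=> x; rewrite in_cons => /orP [/eqP ->|/u'] //; apply: s'.
- by move=> x /s1 /s'.
- by rewrite z' z1 mulSn addnA.
Qed.

Theorem lemma4p1 :
  exists c : nat,
  forall (m : nat) (b : 'I_m -> var) (G : cnf) (k : nat) (I : {set 'I_m}),
    blocking_encoded b G ->
    cost_is b G k ->
    #|I| = k ->
    (forall i, i \in I -> [:: (b i, true)] \in G) ->
    exists ds : seq clause,
      derivation b G ds /\
      (forall j, j \notin I -> [:: (b j, false)] \in ds) /\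
      size ds <= c * (k.+1 * m).
Proof.
exists 2 => m b G k I Hb [[a [Hm Hc]] _] HI Hu.
have aI : forall i, i \in I -> a (b i).
  by move=> i /Hu /Hm /= /orP [/eqP ->|].
have Ha : forall j, j \notin I -> a (b j) = false.
  move=> j jI; apply/negbTE/negP => aj.
  have : #|j |: I| <= cost b a.
    by apply: cost_ge => i; rewrite in_setU1 => /orP [/eqP ->|/aI].
  by rewrite cardsU1 jI Hc HI add1n ltnn.
set ds0 := [seq [:: (b i, true)] | i <- enum I].
have Q0 : Q b G a I ds0.
  split; [|split].
  - by apply: derivation_inG; apply/allP => C /mapP [i iI ->]; apply: Hu; rewrite -mem_enum.
  - by move=> C /mapP [i iI ->]; rewrite /satc /= aI // -mem_enum.
  - by move=> i iI; apply: map_f; rewrite mem_enum.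
set s := [seq j <- enum 'I_m | j \notin I].
have Hc' : cost b a = #|I| by rewrite Hc HI.
have [ds [[Hd _] [Hj [_ Hz]]]] := blocks Hb Hm Hc' Ha (filter_all (fun j => j \notin I) (enum 'I_m)) Q0.
exists ds; split => //; split.
  by move=> j jI; apply: Hj; rewrite mem_filter jI mem_enum.
have hs : size s <= m by rewrite size_filter (leq_trans (count_size _ _)) // size_enum_ord.
have hk : k <= m by rewrite -HI; apply: leq_trans (max_card _) _; rewrite card_ord.
rewrite Hz size_map -cardE HI.
move: hs hk; set n := size _; move=> hs hk; rewrite -/n in Hz *. nia.
Qed.
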